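(* Let $L \ge 1$ and let $\mathcal{N} = \mathcal{N}(0, I_L)$ denote the $L$-dimensional standard Gaussian distribution. Let $\mathsf{Adv}$ be a class of distinguishers (e.g. all probabilistic polynomial-time adversaries) and let $\varepsilon \ge 0$, $t \ge 1$. Let $\mathcal{W}$ be a latent watermarking scheme, viewed as a distribution on $\mathbb{R}^L$ from which watermarked initial latents $Z \leftarrow \mathcal{W}$ are sampled. Let $\mathcal{W}^{\mathrm{sem}}$ be its SemBind variant: it samples $Z \leftarrow \mathcal{W}$, independently samples randomness determining a sign mask $S \in \{-1,+1\}^L$ and a permutation $\pi$ of $\{1,\dots,L\}$, and outputs $Z^{\mathrm{sem}} = F_{S,\pi}(Z) := P_\pi \,\mathrm{Diag}(S)\, Z$, where $P_\pi$ is the permutation matrix of $\pi$. In the multi-sample setting, the $t$ outputs are $F_{S_i,\pi_i}(Z_i)$, $i=1,\dots,t$, where $Z_1,\dots,Z_t$ are i.i.d. from $\mathcal{W}$ and the pairs $\{(S_i,\pi_i)\}_{i=1}^t$ (which may be arbitrarily correlated or shared across $i$, and may force some entries of $S_i$ to $+1$) are jointly independent of $\{Z_i\}_{i=1}^t$. Then: (1) If $\mathcal{W}$ is single-sample $(\varepsilon,\mathsf{Adv})$-undetectable, then $\mathcal{W}^{\mathrm{sem}}$ is single-sample $(\varepsilon,\mathsf{Adv})$-undetectable. (2) If $\mathcal{W}$ is multi-sample $(t,\varepsilon,\mathsf{Adv})$-undetectable, then $\mathcal{W}^{\mathrm{sem}}$ is multi-sample $(t,\varepsilon,\mathsf{A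dv})$-undetectable.
   Context: Single-sample undetectability: a scheme producing a random vector $Z \in \mathbb{R}^L$ is single-sample $(\varepsilon,\mathsf{Adv})$-undetectable if for every distinguisher $D \in \mathsf{Adv}$, $\bigl|\Pr[D(Z)=1] - \Pr[D(G)=1]\bigr| \le \varepsilon$, where $Z$ is drawn from the scheme and $G \leftarrow \mathcal{N}(0,I_L)$. Multi-sample undetectability: the scheme is multi-sample $(t,\varepsilon,\mathsf{Adv})$-undetectable if for every $D \in \mathsf{Adv}$, $\bigl|\Pr[D(Z_1,\dots,Z_t)=1] - \Pr[D(G_1,\dots,G_t)=1]\bigr| \le \varepsilon$, where $Z_1,\dots,Z_t$ are i.i.d. outputs of the scheme and $G_1,\dots,G_t$ are i.i.d. $\mathcal{N}(0,I_L)$. For the SemBind variant, the relevant outputs are the transformed latents $F_{S,\pi}(Z)$ (resp. $(F_{S_i,\pi_i}(Z_i))_{i=1}^t$), compared against i.i.d. standard Gaussians in the same way. *)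

(* Defs.v *)
From HB Require Import structures.
From mathcomp Require Import all_boot all_order all_algebra all_fingroup.
From mathcomp Require Import all_classical all_reals all_analysis.
Set Implicit Arguments. Unset Strict Implicit. Unset Printing Implicit Defensive.
Import Order.TTheory GRing.Theory Num.Theory.
Local Open Scope classical_set_scope.
Local Open Scope ring_scope.

Definition iid_law {d} {T : measurableType d} {R : realType} (n : nat)
    (mu : set T -> \bar R)
    (P : probability (n.-tuple T) R) : Prop :=
  forall B : 'I_n -> set T, (forall i, measurable (B i)) ->
    P [set x | forall i, B i (tnth x i)] = (\prod_(i < n) mu (B i))%E.

Definition std_gaussian {R : realType} (L : nat)
    (G : probability (L.-tuple R) R) : Prop :=
  iid_law (fun A : set R => normal_prob (0 : R) 1 A) G.

(* A (possibly randomised) distinguisher on inputs of type T is represented by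
   its acceptance probability x |-> Pr[D(x) = 1], a measurable [0,1]-valued
   function; Pr[D(X)=1] is then the expectation of this function. *)
Definition distinguisher {d} {T : measurableType d} {R : realType}
    (D : T -> R) : Prop :=
  measurable_fun setT D /\ forall x, 0 <= D x <= 1.

Definition accept {d} {T : measurableType d} {R : realType}
    (P : probability T R) (D : T -> R) : R :=
  Rintegral P setT D.

Definition single_undetectable {R : realType} (L : nat)
    (W : probability (L.-tuple R) R) (eps : R)
    (Adv : set (L.-tuple R -> R)) : Prop :=
  forall G : probability (L.-tuple R) R, std_gaussian G ->
  forall D, Adv D -> `| accept W D - accept G D | <= eps.

Definition multi_undetectable {R : realType} (L t : nat)
    (W : probability (L.-tuple R) R) (eps : R)
    (Adv : set (t.-tuple (L.-tuple R) -> R)) : Prop :=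
  forall (G : probability (L.-tuple R) R)
         (PW PG : probability (t.-tuple (L.-tuple R)) R),
  std_gaussian G -> iid_law W PW -> iid_law G PG ->
  forall D, Adv D -> `| accept PW D - accept PG D | <= eps.

(* A sign mask S in {-1,+1}^L is encoded as s : {ffun 'I_L -> bool},
   with S_i = -1 iff s i = true. *)
Definition sgn {R : realType} (b : bool) : R := if b then -1 else 1.

Definition sem_key (L : nat) := ({ffun 'I_L -> bool} * {perm 'I_L})%type.

(* F_{S,pi}(z) = P_pi Diag(S) z, with P_pi e_i = e_{pi i}, i.e.
   (F z)_j = S_{pi^-1 j} * z_{pi^-1 j}. *)
Definition semF {R : realType} (L : nat) (k : sem_key L)
    (z : L.-tuple R) : L.-tuple R :=
  [tuple sgn (k.1 ((k.2)^-1%g j)) * tnth z ((k.2)^-1%g j) | j < L].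

Definition fin_distr {R : realType} (K : finType) (mu : K -> R) : Prop :=
  (forall k, 0 <= mu k) /\ \sum_(k : K) mu k = 1.

Definition accept_sem1 {R : realType} (L : nat)
    (W : probability (L.-tuple R) R) (mu : sem_key L -> R)
    (D : L.-tuple R -> R) : R :=
  \sum_(k : sem_key L) mu k * accept W (fun z => D (semF k z)).

(* Pr[D((F_{S_i,pi_i}(Z_i))_i) = 1] where (Z_i)_i ~ PW and the (arbitrarily
   correlated) keys ((S_i,pi_i))_i ~ mu, independently of (Z_i)_i. *)
Definition semF_t {R : realType} (L t : nat) (ks : {ffun 'I_t -> sem_key L})
    (zs : t.-tuple (L.-tuple R)) : t.-tuple (L.-tuple R) :=
  [tuple semF (ks i) (tnth zs i) | i < t].

Definition accept_semt {R : realType} (L t : nat)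
    (PW : probability (t.-tuple (L.-tuple R)) R)
    (mu : {ffun 'I_t -> sem_key L} -> R)
    (D : t.-tuple (L.-tuple R) -> R) : R :=
  \sum_(ks : {ffun 'I_t -> sem_key L}) mu ks * accept PW (fun zs => D (semF_t ks zs)).

Definition single_undetectable_sem {R : realType} (L : nat)
    (W : probability (L.-tuple R) R) (mu : sem_key L -> R) (eps : R)
    (Adv : set (L.-tuple R -> R)) : Prop :=
  forall G : probability (L.-tuple R) R, std_gaussian G ->
  forall D, Adv D -> `| accept_sem1 W mu D - accept G D | <= eps.

Definition multi_undetectable_sem {R : realType} (L t : nat)
    (W : probability (L.-tuple R) R) (mu : {ffun 'I_t -> sem_key L} -> R)
    (eps : R) (Adv : set (t.-tuple (L.-tuple R) -> R)) : Prop :=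
  forall (G : probability (L.-tuple R) R)
         (PW PG : probability (t.-tuple (L.-tuple R)) R),
  std_gaussian G -> iid_law W PW -> iid_law G PG ->
  forall D, Adv D -> `| accept_semt PW mu D - accept PG D | <= eps.

(* The reductions used by the class of adversaries: a distinguisher that
   samples the SemBind key itself and runs D on the transformed input. *)
Definition reduce1 {R : realType} (L : nat) (mu : sem_key L -> R)
    (D : L.-tuple R -> R) : L.-tuple R -> R :=
  fun z => \sum_(k : sem_key L) mu k * D (semF k z).

Definition reducet {R : realType} (L t : nat) (mu : {ffun 'I_t -> sem_key L} -> R)
    (D : t.-tuple (L.-tuple R) -> R) : t.-tuple (L.-tuple R) -> R :=
  fun zs => \sum_(ks : {ffun 'I_t -> sem_key L}) mu ks * D (semF_t ks zs).

(* Main.v *)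
Require Import Defs.
From HB Require Import structures.
From mathcomp Require Import all_boot all_order all_algebra all_fingroup.
From mathcomp Require Import all_classical all_reals all_analysis.
Import Order.TTheory GRing.Theory Num.Theory.
Local Open Scope classical_set_scope.
Local Open Scope ring_scope.
Definition rect {T : Type} {n} (B : 'I_n -> set T) : set (n.-tuple T) :=
  [set x | forall i, B i (tnth x i)].

Lemma rect_measurable d (T : measurableType d) n (B : 'I_n -> set T) :
  (forall i, measurable (B i)) -> measurable (rect B).
Proof.
move=> mB.
have -> : rect B = \big[setI/setT]_(i <- index_enum 'I_n) ((@tnth n T)^~ i @^-1` B i).
  rewrite -bigcap_seq; apply/seteqP; split=> x /=.
    by move=> Bx i _; exact: Bx.
  by move=> H i; apply: H => /=; rewrite mem_index_enum.
apply: bigsetI_measurable => i _.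
by rewrite -[X in measurable X]setTI; apply: measurable_tnth.
Qed.

Lemma rect_unique d (T : measurableType d) (R : realType) n
    (m1 m2 : {measure set (n.-tuple T) -> \bar R}) :
  (m1 setT < +oo)%E ->
  (forall B : 'I_n -> set T, (forall i, measurable (B i)) -> m1 (rect B) = m2 (rect B)) ->
  forall A, measurable A -> m1 A = m2 A.
Proof.
move=> m1oo H.
pose G := [set A : set (n.-tuple T) | exists2 B : 'I_n -> set T, (forall i, measurable (B i)) & A = rect B].
have GT : G setT.
  exists (fun _ => setT) => //; by apply/seteqP; split.
apply: (measure_unique G (fun _ => setT)).
- apply/seteqP; split.
    change (g_sigma_preimage (fun i (x : n.-tuple T) => tnth x i) `<=` <<s G >>).
    apply: smallest_sub; first exact: smallest_sigma_algebra.
    apply: (big_ind (fun S => S `<=` <<s G >>)) => //.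
      by move=> S1 S2 h1 h2; rewrite subUset.
    move=> i _ A [C mC <-]; apply: sub_sigma_algebra.
    exists (fun j => if j == i then C else setT).
      by move=> j; case: eqP.
    apply/seteqP; split=> x /=.
      by move=> [_ Cx] j; case: eqP => // ->.
    by move=> h; split => //; have := h i; rewrite eqxx.
  apply: smallest_sub; first exact: sigma_algebra_measurable.
  by move=> A [B mB ->]; exact: rect_measurable.
- move=> A1 A2 [B1 mB1 ->] [B2 mB2 ->].
  exists (fun i => B1 i `&` B2 i); first by move=> i; exact: measurableI.
  apply/seteqP; split=> x /=.
    by move=> [h1 h2] i; split.
  by move=> h; split=> i; case: (h i).
- by [].
- by rewrite bigcup_const //; exists 0%N.
- by move=> A [B mB ->]; exact: H.
- by [].
Qed.
Lemma normal_pdf_sym (R : realType) (x : R) : normal_pdf 0 1 (- x) = normal_pdf 0 1 x.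
Proof. by rewrite /normal_pdf /normal_fun oner_eq0 !subr0 sqrrN. Qed.

Lemma normal_probN (R : realType) (A : set R) : measurable A ->
  normal_prob 0 1 ((fun x => - x) @^-1` A) = normal_prob 0 1 A.
Proof.
move=> mA; rewrite /normal_prob.
transitivity (\int[lebesgue_measure]_(x in (-%R : R -> measurableTypeR R) @^-1` A)
   ((fun y => (normal_pdf 0 1 y)%:E) \o (-%R : R -> measurableTypeR R)) x)%E.
  by apply: eq_integral => x _ /=; rewrite normal_pdf_sym.
rewrite -ge0_integral_pushforward//=.
- apply: eq_measure_integral => /= B mB _.
  exact: (@lebesgue_measureN R B mB).
- move=> mA' Y mY.
  have h := proj2 (measurable_realfun.measurable_EFinP _ _) (@measurable_normal_pdf R 0 1).
  have := h measurableT Y mY; rewrite setTI => h'.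
  exact: measurableI.
- by move=> y _; rewrite lee_fin normal_pdf_ge0.
Qed.
Lemma semF_measurable (R : realType) L (k : sem_key L) :
  measurable_fun setT (@semF R L k).
Proof.
apply/measurable_fun_tnthP => j.
have -> : ((@tnth L R)^~ j \o semF k) =
    (fun z => sgn (k.1 ((k.2)^-1%g j)) * tnth z ((k.2)^-1%g j)).
  by apply/funext => z; rewrite /= /semF tnth_mktuple.
apply: measurable_realfun.measurable_funM => //; exact: measurable_tnth.
Qed.

Lemma sgn_pre (R : realType) (b : bool) (A : set R) : measurable A ->
  measurable ((fun x => sgn b * x) @^-1` A) /\
  normal_prob 0 1 ((fun x => sgn b * x) @^-1` A) = normal_prob 0 1 A.
Proof.
move=> mA; case: b; rewrite /sgn.
  have -> : (fun x : R => -1 * x) @^-1` A = (fun x => - x) @^-1` A.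
    by apply/seteqP; split=> x /=; rewrite mulN1r.
  split; last exact: normal_probN.
  by rewrite -[X in measurable X]setTI; exact: measurable_realfun.oppr_measurable.
have -> : (fun x : R => 1 * x) @^-1` A = A.
  by apply/seteqP; split=> x /=; rewrite mul1r.
by [].
Qed.

Lemma gauss_inv (R : realType) L (G : probability (L.-tuple R) R) (k : sem_key L) :
  std_gaussian G -> forall A, measurable A -> G (semF k @^-1` A) = G A.
Proof.
move=> hG.
have mf := semF_measurable R L k.
apply: (@rect_unique _ _ R L (pushforward G (semF k)) G).
- change (G (semF k @^-1` setT) < +oo)%E.
  by rewrite preimage_setT probability_setT ltry.
- move=> B mB; change (G (semF k @^-1` rect B) = G (rect B)).
  have -> : semF k @^-1` rect B =
      rect (fun i => (fun x => sgn (k.1 i) * x) @^-1` B (k.2 i)).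
    apply/seteqP; split => z /= h i.
      by have := h (k.2 i); rewrite /semF tnth_mktuple permK.
    by rewrite /semF tnth_mktuple; have := h ((k.2)^-1%g i); rewrite permKV.
  have mB' : forall i, measurable ((fun x => sgn (k.1 i) * x) @^-1` B (k.2 i)).
    by move=> i; case: (@sgn_pre R (k.1 i) _ (mB (k.2 i))).
  rewrite /rect (hG _ mB') (hG _ mB).
  under eq_bigr => i _ do rewrite (proj2 (@sgn_pre R (k.1 i) _ (mB (k.2 i)))).
  by rewrite [RHS](reindex_inj (@perm_inj _ k.2)).
Qed.
Lemma accept_inv d (T : measurableType d) (R : realType) (P : probability T R)
    (f : T -> T) (D : T -> R) :
  measurable_fun setT f -> (forall A, measurable A -> P (f @^-1` A) = P A) ->
  distinguisher D -> accept P (D \o f) = accept P D.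
Proof.
move=> mf hf [mD D01]; rewrite /accept /Rintegral; congr fine.
transitivity (\int[pushforward P f]_(y in setT) (D y)%:E)%E.
  rewrite ge0_integral_pushforward //.
  - by apply/measurable_realfun.measurable_EFinP.
  - by move=> y _; rewrite lee_fin; case/andP: (D01 y).
apply: eq_measure_integral => A mA _.
change (P (f @^-1` A) = P A); exact: hf.
Qed.

Lemma lin d (T : measurableType d) (R : realType) (P : probability T R)
    (K : finType) (c : K -> R) (F : K -> T -> R) :
  (forall k, 0 <= c k) -> (forall k, measurable_fun setT (F k)) ->
  (forall k x, 0 <= F k x <= 1) ->
  Rintegral P setT (fun z => \sum_k c k * F k z) =
  \sum_k c k * Rintegral P setT (F k).
Proof.
move=> c0 mF F01.
have fin k : (\int[P]_(x in setT) (F k x)%:E)%E = (Rintegral P setT (F k))%:E.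
  rewrite /Rintegral fineK //; apply: integrable_fin_num => //.
  apply: measurable_bounded_integrable => //.
  - exact: (le_lt_trans (probability_le1 P measurableT) (ltry 1)).
  - exists 1; split => // M M1 x _ /=.
    case/andP: (F01 k x) => h0 h1; rewrite ger0_norm //.
    exact: le_trans h1 (ltW M1).
rewrite /Rintegral.
transitivity (fine (\sum_k (\int[P]_(x in setT) ((c k)%:E * (F k x)%:E)))%E).
  congr fine; rewrite -ge0_integral_sum //.
  - apply: eq_integral => x _; rewrite -sumEFin.
    by apply: eq_bigr => k _; rewrite EFinM.
  - move=> k; apply/measurable_realfun.measurable_EFinP.
    by apply: measurable_realfun.measurable_funM.
  - move=> k x _; rewrite -EFinM lee_fin; apply: mulr_ge0 => //.
    by case/andP: (F01 k x).
transitivity (fine (\sum_k ((c k * Rintegral P setT (F k))%:E))%E).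
  congr fine; apply: eq_bigr => k _.
  rewrite ge0_integralZl //.
  - by rewrite fin EFinM.
  - by apply/measurable_realfun.measurable_EFinP.
  - by move=> x _; rewrite lee_fin; case/andP: (F01 k x).
  - by rewrite lee_fin.
by rewrite sumEFin.
Qed.
Lemma semFt_measurable (R : realType) L t (ks : {ffun 'I_t -> sem_key L}) :
  measurable_fun setT (@semF_t R L t ks).
Proof.
apply/measurable_fun_tnthP => i.
have -> : ((@tnth t (L.-tuple R))^~ i \o semF_t ks) = semF (ks i) \o (@tnth t (L.-tuple R))^~ i.
  by apply/funext => z; rewrite /= /semF_t tnth_mktuple.
apply: measurableT_comp; [exact: semF_measurable | exact: measurable_tnth].
Qed.

Lemma gaussT_inv (R : realType) L t (G : probability (L.-tuple R) R)
    (PG : probability (t.-tuple (L.-tuple R)) R) (ks : {ffun 'I_t -> sem_key L}) :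
  std_gaussian G -> iid_law G PG ->
  forall A, measurable A -> PG (semF_t ks @^-1` A) = PG A.
Proof.
move=> hG hPG.
have mf := semFt_measurable R L t ks.
apply: (@rect_unique _ _ R t (pushforward PG (semF_t ks)) PG).
- change (PG (semF_t ks @^-1` setT) < +oo)%E.
  by rewrite preimage_setT; exact: (le_lt_trans (probability_le1 PG measurableT) (ltry 1)).
- move=> B mB; change (PG (semF_t ks @^-1` rect B) = PG (rect B)).
  have -> : semF_t ks @^-1` rect B = rect (fun i => semF (ks i) @^-1` B i).
    by apply/seteqP; split => z /= h i; have := h i; rewrite /semF_t tnth_mktuple.
  have mB' : forall i, measurable (semF (ks i) @^-1` B i).
    by move=> i; rewrite -[X in measurable X]setTI; exact: semF_measurable.
  rewrite /rect (hPG _ mB') (hPG _ mB).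
  by apply: eq_bigr => i _; rewrite gauss_inv.
Qed.

Theorem theorem1 (R : realType) (L t : nat) (eps : R)
    (W : probability (L.-tuple R) R)
    (Adv1 : set (L.-tuple R -> R))
    (Advt : set (t.-tuple (L.-tuple R) -> R))
    (mu1 : sem_key L -> R) (mut : {ffun 'I_t -> sem_key L} -> R) :
  (1 <= L)%N -> (1 <= t)%N -> 0 <= eps ->
  (forall D, Adv1 D -> distinguisher D) ->
  (forall D, Advt D -> distinguisher D) ->
  fin_distr mu1 -> fin_distr mut ->
  (forall D, Adv1 D -> Adv1 (reduce1 mu1 D)) ->
  (forall D, Advt D -> Advt (reducet mut D)) ->
  (single_undetectable W eps Adv1 -> single_undetectable_sem W mu1 eps Adv1) /\
  (multi_undetectable W eps Advt -> multi_undetectable_sem W mut eps Advt).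
Proof.
move=> _ _ _ hA1 hAt [mu10 mu11] [mut0 mut1] r1 rt; split.
- move=> hW G hG D AD.
  have [mD D01] := hA1 D AD.
  have mDk : forall k, measurable_fun setT (fun z => D (semF k z)).
    by move=> k; apply: measurableT_comp => //; exact: semF_measurable.
  have e1 : accept_sem1 W mu1 D = accept W (reduce1 mu1 D).
    by rewrite /accept_sem1 /accept /reduce1 (@lin _ _ R W _ mu1 (fun k z => D (semF k z))).
  have e2 : accept G D = accept G (reduce1 mu1 D).
    rewrite /accept /reduce1 (@lin _ _ R G _ mu1 (fun k z => D (semF k z))) //.
    transitivity (\sum_k mu1 k * accept G D).
      by rewrite -mulr_suml mu11 mul1r.
    apply: eq_bigr => k _; congr (_ * _).
    rewrite -(@accept_inv _ _ R G (semF k) D) //.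
    + exact: semF_measurable.
    + exact: gauss_inv.
  rewrite e1 e2; exact: hW G hG _ (r1 _ AD).
- move=> hW G PW PG hG hPW hPG D AD.
  have [mD D01] := hAt D AD.
  have mDk : forall ks, measurable_fun setT (fun z => D (semF_t ks z)).
    by move=> ks; apply: measurableT_comp => //; exact: semFt_measurable.
  have e1 : accept_semt PW mut D = accept PW (reducet mut D).
    by rewrite /accept_semt /accept /reducet (@lin _ _ R PW _ mut (fun k z => D (semF_t k z))).
  have e2 : accept PG D = accept PG (reducet mut D).
    rewrite /accept /reducet (@lin _ _ R PG _ mut (fun k z => D (semF_t k z))) //.
    transitivity (\sum_k mut k * accept PG D).
      by rewrite -mulr_suml mut1 mul1r.
    apply: eq_bigr => k _; congr (_ * _).
    rewrite -(@accept_inv _ _ R PG (semF_t k) D) //.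
    + exact: semFt_measurable.
    + exact: gaussT_inv hG hPG.
  rewrite e1 e2; exact: hW G PW PG hG hPW hPG _ (rt _ AD).
Qed.
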